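(* For any completely regular frame $L$, the following are equivalent: (1) $L$ is extremally disconnected; (2) $\overline{\mathrm{C}}(L)=\overline{\mathrm{H}}(L)$; (3) $\overline{\mathrm{C}}(L)$ is a complete lattice.
   Context: $\mathbb{Q}$ is the rationals; $a^\ast$ is the pseudocomplement. A frame is extremally disconnected if $a^\ast\vee a^{\ast\ast}=1$ for all $a$. The frame $\mathfrak{L}(\overline{\mathbb{IR}})$ is presented by generators $(r,\textsf{---})$, $(\textsf{---},s)$ ($r,s\in\mathbb{Q}$) subject to (r1) $(r,\textsf{---})\wedge(\textsf{---},s)=0$ whenever $r\ge s$; (r3) $(r,\textsf{---})=\bigvee_{s>r}(s,\textsf{---})$; (r4) $(\textsf{---},s)=\bigvee_{r<s}(\textsf{---},r)$. $\overline{\mathrm{IC}}(L)$ is the set of frame homomorphisms $\mathfrak{L}(\overline{\mathbb{IR}})\to L$ ordered by $f\le g$ iff $f(r,\textsf{---})\le g(r,\textsf{---})$ and $g(\textsf{---},s)\le f(\textsf{---},s)$ for all $r,s$; $\overline{\mathrm{C}}(L)$ is the subposet of those $f$ with $f(r,\textsf{---})\vee f(\textsf{---},s)=1$ whenever $r<s$; $\overline{\mathrm{H}}(L)$ is the subposet of those $f$ with $f(r,\textsf{---})^\ast\le f(\textsf{---},s)$ and $f(\textsf{---},s)^\ast\le f(r,\textsf{---})$ whenever $r<s$. *)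

(* Defs.v *)
From mathcomp Require Import all_boot all_order all_algebra.
Set Implicit Arguments. Unset Strict Implicit. Unset Printing Implicit Defensive.
Import Order.TTheory GRing.Theory Num.Theory.

Record frame := Frame {
  carrier :> Type;
  le : carrier -> carrier -> Prop;
  le_refl : forall a, le a a;
  le_trans : forall a b c, le a b -> le b c -> le a c;
  le_antisym : forall a b, le a b -> le b a -> a = b;
  meet : carrier -> carrier -> carrier;
  meet_glb : forall a b c, le c (meet a b) <-> (le c a /\ le c b);
  sup : (carrier -> Prop) -> carrier;
  sup_ub : forall (S : carrier -> Prop) x, S x -> le x (sup S);
  sup_least : forall (S : carrier -> Prop) y,
      (forall x, S x -> le x y) -> le (sup S) y;
  meet_sup_distr : forall a (S : carrier -> Prop),
      meet a (sup S) = sup (fun y => exists2 x, S x & y = meet a x)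
}.

Section FrameDefs.
Variable L : frame.

Definition fbot : L := sup (fun _ : L => False).
Definition ftop : L := sup (fun _ : L => True).
Definition fjoin (a b : L) : L := sup (fun x => x = a \/ x = b).

Definition pc (a : L) : L := sup (fun x => meet x a = fbot).

Definition ext_disc : Prop := forall a : L, fjoin (pc a) (pc (pc a)) = ftop.

Definition rather_below (a b : L) : Prop := fjoin (pc a) b = ftop.

Definition completely_below (a b : L) : Prop :=
  exists c : rat -> L, c 0%R = a /\ c 1%R = b /\
    (forall p q : rat, (0 <= p)%R -> (p < q)%R -> (q <= 1)%R ->
        rather_below (c p) (c q)).

Definition completely_regular : Prop :=
  forall a : L, a = sup (fun x => completely_below x a).

(** By the universal property of the presentation, a frame homomorphism
   f : L(IR-bar) -> L is the same thing as an assignment of the generators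
   (r,--) |-> fl r and (--,s) |-> fr s satisfying the images of the
   relations (r1), (r3), (r4) in L. *)
Record ir_map := IRMap { fl : rat -> L; fr : rat -> L }.

Definition is_frame_hom_IR (f : ir_map) : Prop :=
  (forall r s : rat, (s <= r)%R -> meet (fl f r) (fr f s) = fbot) /\
  (forall r : rat, fl f r = sup (fun x => exists2 s : rat, (r < s)%R & x = fl f s)) /\
  (forall s : rat, fr f s = sup (fun x => exists2 r : rat, (r < s)%R & x = fr f r)).

Definition ICbar (f : ir_map) : Prop := is_frame_hom_IR f.

Definition ic_le (f g : ir_map) : Prop :=
  (forall r : rat, le (fl f r) (fl g r)) /\ (forall s : rat, le (fr g s) (fr f s)).

Definition Cbar (f : ir_map) : Prop :=
  ICbar f /\ forall r s : rat, (r < s)%R -> fjoin (fl f r) (fr f s) = ftop.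

Definition Hbar (f : ir_map) : Prop :=
  ICbar f /\ forall r s : rat, (r < s)%R ->
     le (pc (fl f r)) (fr f s) /\ le (pc (fr f s)) (fl f r).

Definition Cbar_eq_Hbar : Prop := forall f : ir_map, Cbar f <-> Hbar f.

Definition Cbar_complete : Prop :=
  forall S : ir_map -> Prop, (forall f, S f -> Cbar f) ->
    exists u : ir_map, Cbar u /\ (forall f, S f -> ic_le f u) /\
      (forall v, Cbar v -> (forall f, S f -> ic_le f v) -> ic_le u v).

End FrameDefs.

(* Main.v *)
Require Import Defs.
From mathcomp Require Import all_boot all_order all_algebra.
From mathcomp Require Import lra.
Import Order.TTheory GRing.Theory Num.Theory.
Local Open Scope ring_scope.

Lemma leR {L : frame} (a : L) : le a a. Proof. exact: Defs.le_refl. Qed.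
Lemma leT {L : frame} (a b c : L) : le a b -> le b c -> le a c. Proof. exact: Defs.le_trans. Qed.
Arguments leT {L a} b {c}.
Lemma fbot_le {L : frame} (x : L) : le (fbot L) x. Proof. by apply: sup_least. Qed.
Lemma fle_top {L : frame} (x : L) : le x (ftop L). Proof. by apply: sup_ub. Qed.
Lemma top_eq {L : frame} (x : L) : le (ftop L) x -> x = ftop L.
Proof. by move=> h; apply: Defs.le_antisym => //; apply: fle_top. Qed.
Lemma bot_eq {L : frame} (x : L) : le x (fbot L) -> x = fbot L.
Proof. by move=> h; apply: Defs.le_antisym => //; apply: fbot_le. Qed.
Lemma meet_l {L : frame} (a b : L) : le (meet a b) a.
Proof. by have [h _] := (meet_glb a b (meet a b)).1 (leR _). Qed.
Lemma meet_r {L : frame} (a b : L) : le (meet a b) b.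
Proof. by have [_ h] := (meet_glb a b (meet a b)).1 (leR _). Qed.
Lemma meet_gl {L : frame} (a b c : L) : le c a -> le c b -> le c (meet a b).
Proof. by move=> h1 h2; apply/meet_glb. Qed.
Lemma fmeetC {L : frame} (a b : L) : meet a b = meet b a.
Proof. by apply: Defs.le_antisym; apply: meet_gl; (apply: meet_l || apply: meet_r). Qed.
Lemma meet_mono {L : frame} (a b c d : L) : le a c -> le b d -> le (meet a b) (meet c d).
Proof. move=> h1 h2; apply: meet_gl; [exact: leT _ (meet_l _ _) h1|exact: leT _ (meet_r _ _) h2]. Qed.
Lemma meet_top {L : frame} (a : L) : meet a (ftop L) = a.
Proof. by apply: Defs.le_antisym; [apply: meet_l|apply: meet_gl; [apply: leR|apply: fle_top]]. Qed.
Lemma meet_bot {L : frame} (a : L) : meet a (fbot L) = fbot L.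
Proof. by apply: bot_eq; apply: meet_r. Qed.
Lemma meet_le_eq {L : frame} (a b : L) : le a b -> meet a b = a.
Proof. by move=> h; apply: Defs.le_antisym; [apply: meet_l|apply: meet_gl=>//; apply: leR]. Qed.

Lemma join_l {L : frame} (a b : L) : le a (fjoin a b). Proof. by apply: sup_ub; left. Qed.
Lemma join_r {L : frame} (a b : L) : le b (fjoin a b). Proof. by apply: sup_ub; right. Qed.
Lemma join_least {L : frame} (a b c : L) : le a c -> le b c -> le (fjoin a b) c.
Proof. by move=> h1 h2; apply: sup_least => x [->|->]. Qed.
Lemma join_mono {L : frame} (a b c d : L) : le a c -> le b d -> le (fjoin a b) (fjoin c d).
Proof. move=> h1 h2; apply: join_least; [exact: leT h1 (join_l _ _)|exact: leT h2 (join_r _ _)]. Qed.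

Lemma meet_join {L : frame} (a b c : L) : le (meet a (fjoin b c)) (fjoin (meet a b) (meet a c)).
Proof.
rewrite meet_sup_distr; apply: sup_least => y [x [->|->] ->]; [apply: join_l|apply: join_r].
Qed.

Lemma sup_bot {L : frame} (S : L -> Prop) : (forall x, S x -> x = fbot L) -> sup S = fbot L.
Proof. by move=> h; apply: bot_eq; apply: sup_least => x /h ->; apply: leR. Qed.

Lemma meet_sup_bot {L : frame} (a : L) (S : L -> Prop) :
  (forall x, S x -> meet a x = fbot L) -> meet a (sup S) = fbot L.
Proof. by move=> h; rewrite meet_sup_distr; apply: sup_bot => y [x /h <- ->]. Qed.

Lemma pc_meet {L : frame} (a : L) : meet a (pc a) = fbot L.
Proof. by apply: meet_sup_bot => x h; rewrite fmeetC. Qed.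
Lemma pc_ub {L : frame} (a x : L) : meet x a = fbot L -> le x (pc a).
Proof. by move=> h; apply: sup_ub. Qed.
Lemma pc_ub' {L : frame} (a x : L) : meet a x = fbot L -> le x (pc a).
Proof. by rewrite fmeetC; apply: pc_ub. Qed.
Lemma le_pc_meet {L : frame} (a x : L) : le x (pc a) -> meet x a = fbot L.
Proof.
move=> h; apply: bot_eq; rewrite -(pc_meet a) fmeetC; apply: meet_mono => //; apply: leR.
Qed.
Lemma pc_anti {L : frame} (a b : L) : le a b -> le (pc b) (pc a).
Proof.
move=> h; apply: pc_ub; apply: bot_eq; rewrite -(pc_meet b) fmeetC.
by apply: meet_mono => //; apply: leR.
Qed.
Lemma le_pcpc {L : frame} (a : L) : le a (pc (pc a)).
Proof. by apply: pc_ub; apply: pc_meet. Qed.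
Lemma pc3 {L : frame} (a : L) : pc (pc (pc a)) = pc a.
Proof. by apply: Defs.le_antisym; [apply: pc_anti; apply: le_pcpc|apply: le_pcpc]. Qed.
Lemma pc_top {L : frame} : pc (fbot L) = ftop L.
Proof. by apply: top_eq; apply: pc_ub; apply: meet_bot. Qed.
Lemma pc_bot {L : frame} : pc (ftop L) = fbot L.
Proof. by have := pc_meet (ftop L); rewrite fmeetC meet_top. Qed.

Lemma join_top_pc {L : frame} (a b : L) : fjoin a b = ftop L -> le (pc a) b.
Proof.
move=> h; rewrite -(meet_top (pc a)) -h; apply: leT _ (meet_join _ _ _) _.
apply: join_least; last by apply: meet_r.
by rewrite fmeetC pc_meet; apply: fbot_le.
Qed.
Lemma rb_le {L : frame} (a b : L) : rather_below a b -> le a b.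
Proof.
move=> h; rewrite -(meet_top a) -h; apply: leT _ (meet_join _ _ _) _.
apply: join_least; last by apply: meet_r.
by rewrite pc_meet; apply: fbot_le.
Qed.
Lemma join_topC {L : frame} (a b : L) : fjoin a b = ftop L -> fjoin b a = ftop L.
Proof. by move=> h; apply: top_eq; rewrite -h; apply: join_least; [apply: join_r|apply: join_l]. Qed.
Lemma join_top_mono {L : frame} (a b c d : L) : le a c -> le b d -> fjoin a b = ftop L -> fjoin c d = ftop L.
Proof. by move=> h1 h2 h; apply: top_eq; rewrite -h; apply: join_mono. Qed.

Ltac nb := repeat match goal with
  | H : (_ < _) = false |- _ => move/negbT: H; rewrite -leNgt => H
  | H : (_ <= _) = false |- _ => move/negbT: H; rewrite -ltNge => H
  | H : is_true (_ && _) |- _ => case/andP: H => ? ?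
  | H : (?x < ?y) = true |- _ => have {H} : is_true (x < y) by exact: H
  | H : (?x <= ?y) = true |- _ => have {H} : is_true (x <= y) by exact: H
  end; intros.
Ltac qlra := nb; match goal with
 | |- (_ < _) = false => apply/negbTE; rewrite -leNgt; lra
 | |- (_ <= _) = false => apply/negbTE; rewrite -ltNge; lra
 | |- is_true (_ && _) => apply/andP; split; lra
 | |- is_true _ => lra
 | |- _ = true => lra
 | _ => exfalso; lra end.
Tactic Notation "rF" constr(b) := rewrite (_ : b = false) /=; last qlra.
Tactic Notation "rT" constr(b) := rewrite (_ : b = true) /=; last qlra.


Lemma fl_anti {L : frame} (f : ir_map L) r s : ICbar f -> r < s -> le (fl f s) (fl f r).
Proof. by move=> [_ [h3 _]] rs; rewrite (h3 r); apply: sup_ub; exists s. Qed.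
Lemma fr_mono {L : frame} (f : ir_map L) r s : ICbar f -> r < s -> le (fr f r) (fr f s).
Proof. by move=> [_ [_ h4]] rs; rewrite (h4 s); apply: sup_ub; exists r. Qed.
Lemma fr_pc {L : frame} (f : ir_map L) r s : ICbar f -> s <= r -> le (fr f s) (pc (fl f r)).
Proof. by move=> [h1 _] sr; apply: pc_ub'; apply: h1. Qed.

Lemma C_H {L : frame} (f : ir_map L) : Cbar f -> Hbar f.
Proof.
move=> [hI hC]; split => // r s rs; split; first by apply: join_top_pc; apply: hC.
by apply: join_top_pc; apply: join_topC; apply: hC.
Qed.

Lemma ED_H_C {L : frame} (f : ir_map L) : ext_disc L -> Hbar f -> Cbar f.
Proof.
move=> ed [hI hH]; split => // r s rs.
set t := (r + s) / 2.
have rt : r < t by rewrite /t; qlra.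
have ts : t < s by rewrite /t; qlra.
apply: join_topC; apply: (@join_top_mono _ _ _ _ _ _ _ (ed (fl f t))).
  exact: (hH t s ts).1.
apply: (leT _ (pc_anti _ _ (fr_pc _ t t hI (lexx t)))).
exact: (hH r t rt).2.
Qed.

Tactic Notation "rF" constr(b) := rewrite (_ : b = false) /=; last qlra.
Tactic Notation "rT" constr(b) := rewrite (_ : b = true) /=; last qlra.

Definition Gmap {L : frame} (a : L) : ir_map L :=
  IRMap (fun r : rat => if r < 0 then ftop L else if r < 1 then pc a else fbot L)
        (fun s : rat => if s <= 0 then fbot L else if s <= 1 then pc (pc a) else ftop L).

Lemma Gmap_H {L : frame} (a : L) : Hbar (Gmap a).
Proof.
split; first split; [|split|].
- move=> r s sr /=.
  case h1: (r < 0) => /=; first by case h2 : (s <= 0); [apply: meet_bot| qlra].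
  case h2: (s <= 0) => /=; first by apply: meet_bot.
  case h3: (r < 1) => /=; last by rewrite fmeetC meet_bot.
  case h4: (s <= 1) => /=; first by apply: pc_meet.
  qlra.
- move=> r /=; apply: Defs.le_antisym.
  + case h1: (r < 0) => /=.
      apply: sup_ub; exists (r / 2); first qlra.
      by rT (r / 2 < 0).
    case h2: (r < 1) => /=; last by apply: fbot_le.
    apply: sup_ub; exists ((r + 1) / 2); first qlra.
    by rF ((r + 1) / 2 < 0); rT ((r + 1) / 2 < 1).
  + apply: sup_least => x [s rs ->] /=.
    case h1: (r < 0) => /=; first by apply: fle_top.
    rF (s < 0).
    case h2: (r < 1) => /=.
      by case: (s < 1); [apply: leR|apply: fbot_le].
    by rF (s < 1); apply: leR.
- move=> s /=; apply: Defs.le_antisym.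
  + case h1: (s <= 0) => /=; first by apply: fbot_le.
    case h2: (s <= 1) => /=.
      apply: sup_ub; exists (s / 2); first qlra.
      by rF (s / 2 <= 0); rT (s / 2 <= 1).
    apply: sup_ub; exists ((s + 1) / 2); first qlra.
    by rF ((s + 1) / 2 <= 0); rF ((s + 1) / 2 <= 1).
  + apply: sup_least => x [r rs ->] /=.
    case h1: (r <= 0) => /=; first by apply: fbot_le.
    rF (s <= 0).
    case h2: (r <= 1) => /=.
      by case: (s <= 1); [apply: leR|apply: fle_top].
    by rF (s <= 1); apply: leR.
- move=> r s rs /=; split.
  + case h1: (r < 0) => /=; first by rewrite pc_bot; apply: fbot_le.
    rF (s <= 0).
    case h2: (r < 1) => /=.
      by case: (s <= 1); [apply: leR|apply: fle_top].
    by rF (s <= 1); apply: fle_top.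
  + case h1: (r < 0) => /=; first by apply: fle_top.
    case h2: (r < 1) => /=.
      rF (s <= 0).
      by case: (s <= 1); [rewrite pc3; apply: leR|rewrite pc_bot; apply: fbot_le].
    by rF (s <= 0); rF (s <= 1); rewrite pc_bot; apply: leR.
Qed.

Lemma CH_ED {L : frame} : Cbar_eq_Hbar L -> ext_disc L.
Proof.
move=> h a; have [_ hC] := (h (Gmap a)).2 (Gmap_H a).
by have := hC 0 1 ltr01 => /=.
Qed.

Lemma meet2_bot {L : frame} (S T : L -> Prop) :
  (forall x y, S x -> T y -> meet x y = fbot L) -> meet (sup S) (sup T) = fbot L.
Proof.
move=> h; apply: meet_sup_bot => y Ty; rewrite fmeetC; apply: meet_sup_bot => x Sx.
by rewrite fmeetC; exact: h.
Qed.

Definition gS {L : frame} (S : ir_map L -> Prop) (t : rat) : L := sup (fun x => exists2 f, S f & x = fl f t).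
Definition uS {L : frame} (S : ir_map L -> Prop) : ir_map L :=
  IRMap (fun r => sup (fun x => exists2 t, r < t & x = pc (pc (gS S t))))
        (fun s => sup (fun x => exists2 t, t < s & x = pc (gS S t))).

Lemma g_anti {L : frame} (S : ir_map L -> Prop) (SC : forall f, S f -> Cbar f) r t : r < t -> le (gS S t) (gS S r).
Proof.
move=> rt; apply: sup_least => x [f Sf ->].
apply: leT _ (fl_anti _ _ _ (SC _ Sf).1 rt) _.
by apply: sup_ub; exists f.
Qed.

Lemma u_C {L : frame} (S : ir_map L -> Prop) (SC : forall f, S f -> Cbar f) (ED : ext_disc L) : Cbar (uS S).
Proof.
split; first split; [|split|].
- move=> r s sr /=; apply: meet2_bot => x y [t rt ->] [t' ts ->].
  apply: bot_eq; apply: (leT (meet (pc (pc (gS S t))) (pc (gS S t)))).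
    apply: meet_mono; first exact: leR.
    by apply: pc_anti; apply: (g_anti _ SC); lra.
  by rewrite fmeetC pc_meet; apply: leR.
- move=> r /=; apply: Defs.le_antisym.
  + apply: sup_least => x [t rt ->].
    apply: (leT (fl (uS S) ((r + t) / 2))); last by apply: sup_ub; exists ((r + t) / 2) => //; lra.
    by apply: sup_ub; exists t => //; lra.
  + apply: sup_least => x [s rs ->]; apply: sup_least => y [t st ->].
    by apply: sup_ub; exists t => //; lra.
- move=> s /=; apply: Defs.le_antisym.
  + apply: sup_least => x [t ts ->].
    apply: (leT (fr (uS S) ((s + t) / 2))); last by apply: sup_ub; exists ((s + t) / 2) => //; lra.
    by apply: sup_ub; exists t => //; lra.
  + apply: sup_least => x [r rs ->]; apply: sup_least => y [t rt ->].
    by apply: sup_ub; exists t => //; lra.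
- move=> r s rs; set t := (r + s) / 2.
  apply: (@join_top_mono _ _ _ _ _ _ _ (join_topC _ _ (ED (gS S t)))).
  + by apply: sup_ub; exists t => //; rewrite /t; lra.
  + by apply: sup_ub; exists t => //; rewrite /t; lra.
Qed.

Lemma u_ub {L : frame} (S : ir_map L -> Prop) (SC : forall f, S f -> Cbar f) f : S f -> ic_le f (uS S).
Proof.
move=> Sf; have [[h1 [h3 h4]] hC] := SC _ Sf; split => [r|s] /=.
- rewrite h3; apply: sup_least => x [t rt ->].
  apply: (leT (pc (pc (gS S t)))); last by apply: sup_ub; exists t.
  apply: leT _ (le_pcpc _); by apply: sup_ub; exists f.
- apply: sup_least => x [t ts ->].
  apply: leT _ (join_top_pc _ _ (hC _ _ ts)).
  by apply: pc_anti; apply: sup_ub; exists f.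
Qed.

Lemma u_least {L : frame} (S : ir_map L -> Prop) v : Cbar v -> (forall f, S f -> ic_le f v) -> ic_le (uS S) v.
Proof.
move=> [[h1 [h3 h4]] hC] hv.
have gv t : le (gS S t) (fl v t) by apply: sup_least => x [f Sf ->]; exact: (hv f Sf).1.
split => [r|s] /=.
- apply: sup_least => x [t rt ->].
  apply: (leT (pc (pc (fl v t)))); first by apply: pc_anti; apply: pc_anti.
  apply: (leT (pc (fr v t))); first by apply: pc_anti; apply: pc_ub'; apply: h1.
  by apply: join_top_pc; apply: join_topC; apply: hC.
- rewrite h4; apply: sup_least => x [t ts ->].
  apply: (leT (pc (gS S t))); last by apply: sup_ub; exists t.
  apply: (leT (pc (fl v t))); first by apply: pc_ub'; apply: h1.
  by apply: pc_anti.
Qed.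


Lemma ED_complete {L : frame} : ext_disc L -> Cbar_complete L.
Proof.
move=> ed S SC; eexists; split; first exact: (u_C _ SC ed).
split; [exact: (u_ub _ SC) | exact: u_least].
Qed.

Definition scl {L : frame} (c : rat -> L) : Prop :=
  forall p q : rat, 0 <= p -> p < q -> q <= 1 -> rather_below (c p) (c q).

Lemma scl_le {L : frame} (c : rat -> L) p q : scl c -> 0 <= p -> p < q -> q <= 1 -> le (c p) (c q).
Proof. by move=> h h1 h2 h3; apply: rb_le; apply: h. Qed.

Definition Fmap {L : frame} (c : rat -> L) : ir_map L :=
  IRMap (fun r => if r < 0 then ftop L else sup (fun x => exists2 p, (0 <= p) && (p + r < 1) & x = c p))
        (fun s => if 1 < s then ftop L else sup (fun x => exists2 q, (q <= 1) && (1 - s < q) & x = pc (c q))).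

Lemma flF {L : frame} (c : rat -> L) r : fl (Fmap c) r =
  if r < 0 then ftop L else sup (fun x => exists2 p, (0 <= p) && (p + r < 1) & x = c p).
Proof. by []. Qed.
Lemma frF {L : frame} (c : rat -> L) s : fr (Fmap c) s =
  if 1 < s then ftop L else sup (fun x => exists2 q, (q <= 1) && (1 - s < q) & x = pc (c q)).
Proof. by []. Qed.
Tactic Notation "cs" ident(h) constr(b) := case h: b; cbv beta iota.
Tactic Notation "rF'" constr(b) := rewrite (_ : b = false); [cbv beta iota|qlra].
Tactic Notation "rT'" constr(b) := rewrite (_ : b = true); [cbv beta iota|qlra].

Definition Nmap {L : frame} (f : ir_map L) : ir_map L :=
  IRMap (fun r => fr f (1 - r)) (fun s => fl f (1 - s)).

Lemma flN {L : frame} (f : ir_map L) r : fl (Nmap f) r = fr f (1 - r). Proof. by []. Qed.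
Lemma frN {L : frame} (f : ir_map L) s : fr (Nmap f) s = fl f (1 - s). Proof. by []. Qed.

Lemma Nmap_C {L : frame} (f : ir_map L) : Cbar f -> Cbar (Nmap f).
Proof.
move=> [[h1 [h3 h4]] hC]; split; first split; [|split|].
- by move=> r s sr /=; rewrite fmeetC; apply: h1; lra.
- move=> r /=; rewrite h4; apply: Defs.le_antisym.
  + apply: sup_least => x [t tr ->]; apply: sup_ub; exists (1 - t); first lra.
    by rewrite (_ : 1 - (1 - t) = t) //; lra.
  + apply: sup_least => x [s rs ->]; apply: sup_ub; exists (1 - s) => //; lra.
- move=> s /=; rewrite h3; apply: Defs.le_antisym.
  + apply: sup_least => x [t tr ->]; apply: sup_ub; exists (1 - t); first lra.
    by rewrite (_ : 1 - (1 - t) = t) //; lra.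
  + apply: sup_least => x [r rs ->]; apply: sup_ub; exists (1 - r) => //; lra.
- by move=> r s rs /=; apply: join_topC; apply: hC; lra.
Qed.

Lemma empty_sup {L : frame} (P : L -> Prop) : (forall x, ~ P x) -> sup P = fbot L.
Proof. by move=> h; apply: sup_bot => x /h. Qed.

Lemma Fmap_C {L : frame} (c : rat -> L) : scl c -> Cbar (Fmap c).
Proof.
move=> sc; split; first split; [|split|].
- move=> r s sr; rewrite flF frF.
  cs h1 (r < 0).
    rF' (1 < s); rewrite empty_sup; first by rewrite meet_bot.
    by move=> x [q hq _]; qlra.
  cs h2 (1 < s).
    rewrite empty_sup; first by rewrite fmeetC meet_bot.
    by move=> x [p hp _]; qlra.
  apply: meet2_bot => x y [p hp ->] [q hq ->].
  apply: bot_eq; apply: (leT (meet (c q) (pc (c q)))); last by rewrite pc_meet; apply: leR.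
  apply: meet_mono; last exact: leR.
  apply: scl_le => //; qlra.
- move=> r; rewrite flF.
  cs h1 (r < 0).
    symmetry; apply: top_eq; apply: (leT (fl (Fmap c) (r / 2))).
      by rewrite flF; rT' (r / 2 < 0); apply: leR.
    by apply: sup_ub; exists (r / 2) => //; qlra.
  apply: Defs.le_antisym.
  + apply: sup_least => x [p hp ->].
    have hs : (r + (1 - r - p) / 2 < 0) = false by qlra.
    apply: (leT (fl (Fmap c) (r + (1 - r - p) / 2))).
      by rewrite flF hs; apply: sup_ub; exists p => //; qlra.
    by apply: sup_ub; exists (r + (1 - r - p) / 2) => //; qlra.
  + apply: sup_least => x [s rs ->]; rewrite flF; rF' (s < 0).
    apply: sup_least => y [p hp ->]; apply: sup_ub; exists p => //; qlra.
- move=> s; rewrite frF.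
  cs h1 (1 < s).
    symmetry; apply: top_eq; apply: (leT (fr (Fmap c) ((1 + s) / 2))).
      by rewrite frF; rT' (1 < (1 + s) / 2); apply: leR.
    by apply: sup_ub; exists ((1 + s) / 2) => //; qlra.
  apply: Defs.le_antisym.
  + apply: sup_least => x [q hq ->].
    have hs : (1 < (s + (1 - q)) / 2) = false by qlra.
    apply: (leT (fr (Fmap c) ((s + (1 - q)) / 2))).
      by rewrite frF hs; apply: sup_ub; exists q => //; qlra.
    by apply: sup_ub; exists ((s + (1 - q)) / 2) => //; qlra.
  + apply: sup_least => x [r rs ->]; rewrite frF; rF' (1 < r).
    apply: sup_least => y [q hq ->]; apply: sup_ub; exists q => //; qlra.
- move=> r s rs; rewrite flF frF.
  cs h1 (r < 0); first by apply: top_eq; apply: join_l.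
  cs h2 (1 < s); first by apply: top_eq; apply: join_r.
  set q := 1 - (2 * s + r) / 3; set p := 1 - (s + 2 * r) / 3.
  have hqp : rather_below (c q) (c p) by apply: sc; rewrite /p /q; qlra.
  apply: (join_top_mono _ _ _ _ _ _ (join_topC _ _ hqp)).
  + by apply: sup_ub; exists p => //; rewrite /p; qlra.
  + by apply: sup_ub; exists q => //; rewrite /q; qlra.
Qed.

Lemma Fmap_L2 {L : frame} (c : rat -> L) s : scl c -> s <= 1 -> meet (fr (Fmap c) s) (c 0) = fbot L.
Proof.
move=> sc hs; rewrite frF; rF' (1 < s); rewrite fmeetC; apply: meet_sup_bot => y [q hq ->].
apply: bot_eq; apply: (leT (meet (c q) (pc (c q)))); last by rewrite pc_meet; apply: leR.
apply: meet_mono; last exact: leR.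
apply: scl_le => //; qlra.
Qed.

Lemma Fmap_UB {L : frame} (c d : rat -> L) : scl c -> scl d -> d 1 = pc (c 1) ->
  ic_le (Fmap c) (Nmap (Fmap d)).
Proof.
move=> sc sd hd; split => [r|s]; rewrite ?flN ?frN ?flF ?frF.
- cs h1 (r < 0); first by rT' (1 < 1 - r); apply: leR.
  rF' (1 < 1 - r); apply: sup_least => x [p hp ->].
  apply: (leT (c 1)); first by apply: scl_le => //; qlra.
  apply: (leT (pc (d 1))); first by rewrite hd; apply: le_pcpc.
  by apply: sup_ub; exists 1 => //; qlra.
- cs h1 (1 < s); first by apply: fle_top.
  rF' (1 - s < 0); apply: sup_least => x [p hp ->].
  apply: (leT (d 1)); first by apply: scl_le => //; qlra.
  rewrite hd; apply: sup_ub; exists 1 => //; qlra.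
Qed.

Lemma complete_ED {L : frame} : completely_regular L -> Cbar_complete L -> ext_disc L.
Proof.
move=> CR comp a.
pose S := fun f => exists c : rat -> L, [/\ c 1 = a, scl c & f = Fmap c].
have SC : forall f, S f -> Cbar f by move=> f [c [_ sc ->]]; apply: Fmap_C.
have [u [Cu [ubu leu]]] := comp S SC.
have c1 : le (fr u 1) (pc a).
  apply: pc_ub; rewrite (CR a); apply: meet_sup_bot => x [c [c0 [c1 sc]]].
  have Sf : S (Fmap c) by exists c; split.
  have [_ h] := ubu _ Sf.
  apply: bot_eq; rewrite -(Fmap_L2 _ 1 sc (lexx _)) c0.
  by apply: meet_mono; [apply: h|apply: leR].
have c2 : le (fl u 0) (pc (pc a)).
  apply: pc_ub; rewrite (CR (pc a)); apply: meet_sup_bot => y [d [d0 [d1 sd]]].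
  have Ck : Cbar (Nmap (Fmap d)) by apply: Nmap_C; apply: Fmap_C.
  have ubk : forall f, S f -> ic_le f (Nmap (Fmap d)).
    by move=> f [c [e sc ->]]; apply: Fmap_UB => //; rewrite d1 e.
  have [h _] := leu _ Ck ubk.
  have hs : (1 - 0 : rat) <= 1 by lra.
  apply: bot_eq; rewrite -(Fmap_L2 _ (1 - 0) sd hs) d0.
  by apply: meet_mono; [apply: h|apply: leR].
apply: join_topC; apply: (join_top_mono _ _ _ _ c2 c1); apply: (Cu.2 0 1); lra.
Qed.

Theorem proposition3p11 (L : frame) :
  completely_regular L ->
  (ext_disc L <-> Cbar_eq_Hbar L) /\ (ext_disc L <-> Cbar_complete L).
Proof.
move=> CR; split; split.
- by move=> ed f; split; [apply: C_H | apply: ED_H_C].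
- exact: CH_ED.
- exact: ED_complete.
- exact: complete_ED.
Qed.
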